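(* For all $n\ge 4$, there is no perfect lattice code in $\mathcal{A}(n,n-2,1)$.
   Context: For integers $n\ge 1$, $0\le t\le n$, $\ell\ge 1$, let $\mathcal{S}(n,t,\ell)=\{\mathcal{E}\in\mathbb{Z}^n: 0\le\varepsilon_i\le\ell \text{ for all } i,\ w_H(\mathcal{E})\le t\}$, where $w_H$ is the number of nonzero coordinates. A lattice here is the set of integer combinations of $n$ linearly independent vectors of $\mathbb{Z}^n$. $\mathcal{A}(n,t,\ell)$ is the set of lattices $\mathcal{L}\subseteq\mathbb{Z}^n$ such that the translates $X+\mathcal{S}(n,t,\ell)$, $X\in\mathcal{L}$, are pairwise disjoint. Such $\mathcal{L}$ is perfect if these translates also cover $\mathbb{Z}^n$. *)

(* Defs.v *)
From mathcomp Require Import all_boot all_order all_algebra.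

Import Order.TTheory GRing.Theory Num.Theory.
Local Open Scope ring_scope.

Definition Sball (n t l : nat) (e : 'rV[int]_n) : Prop :=
  (forall i : 'I_n, 0 <= e ord0 i <= l%:Z) /\
  (#|[set i : 'I_n | e ord0 i != 0]| <= t)%N.

Definition lattice_of (n : nat) (B : 'M[int]_n) (x : 'rV[int]_n) : Prop :=
  exists c : 'rV[int]_n, x = c *m B.

Definition lin_indep_rows (n : nat) (B : 'M[int]_n) : Prop :=
  row_free (map_mx (fun z : int => z%:~R : rat) B).

(* L in A(n,t,l): the translates X + S(n,t,l), X in L, are pairwise disjoint. *)
Definition packing (n t l : nat) (L : 'rV[int]_n -> Prop) : Prop :=
  forall X Y e1 e2 : 'rV[int]_n, L X -> L Y -> Sball n t l e1 -> Sball n t l e2 ->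
    X + e1 = Y + e2 -> X = Y.

Definition covering (n t l : nat) (L : 'rV[int]_n -> Prop) : Prop :=
  forall z : 'rV[int]_n, exists X e, L X /\ Sball n t l e /\ z = X + e.

Definition perfect (n t l : nat) (L : 'rV[int]_n -> Prop) : Prop :=
  packing n t l L /\ covering n t l L.

(* Main.v *)
Require Import Defs.
From mathcomp Require Import all_boot all_order all_algebra zify ring lra.
Import Order.TTheory GRing.Theory Num.Theory.
Local Open Scope ring_scope.
Set Implicit Arguments. Unset Strict Implicit.

Definition ind (n : nat) (A : {set 'I_n}) : 'rV[int]_n :=
  \row_j (if j \in A then 1 else 0).

Arguments ind {n}.

Lemma indE n (A : {set 'I_n}) j : ind A ord0 j = if j \in A then 1 else 0.
Proof. by rewrite mxE. Qed.

Lemma ind0 n : ind (set0 : {set 'I_n}) = 0.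
Proof. by apply/rowP => j; rewrite indE !mxE inE. Qed.

Lemma indU n (A B : {set 'I_n}) : [disjoint A & B] -> ind (A :|: B) = ind A + ind B.
Proof.
move=> dAB; apply/rowP => j; rewrite !mxE inE.
case jA: (j \in A); case jB: (j \in B) => //=.
by move/disjointFr: dAB => /(_ j jA); rewrite jB.
Qed.

Lemma indC n (A : {set 'I_n}) : ind (~: A) = ind setT - ind A.
Proof. by apply/rowP => j; rewrite !mxE !inE; case: (j \in A). Qed.

Lemma indD1 n (A : {set 'I_n}) i : i \in A -> ind A = ind [set i] + ind (A :\ i).
Proof.
move=> iA; apply/rowP => j; rewrite !mxE !inE.
by case: eqVneq => [->|]; rewrite ?iA //=; case: (j \in A).
Qed.

Lemma indU1 n (A : {set 'I_n}) i : i \notin A -> ind (i |: A) = ind [set i] + ind A.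
Proof.
move=> iA; apply/rowP => j; rewrite !mxE !inE.
by case: eqVneq => [->|]; rewrite ?(negbTE iA) //=; case: (j \in A).
Qed.

Lemma ind_inj n (A B : {set 'I_n}) : ind A = ind B -> A = B.
Proof.
move=> e; apply/setP => j; have := congr1 (fun v : 'rV[int]_n => v ord0 j) e; rewrite /= !indE.
by case: (j \in A); case: (j \in B).
Qed.

Lemma cardD1' n (A : {set 'I_n}) i : i \in A -> #|A| = (#|A :\ i|).+1.
Proof. by move=> iA; rewrite (cardsD1 i A) iA. Qed.
Lemma cardU1' n (A : {set 'I_n}) i : i \notin A -> #|i |: A| = (#|A|).+1.
Proof. by move=> iA; rewrite cardsU1 iA. Qed.
Lemma cardC' n (A : {set 'I_n}) : #|~: A| = (n - #|A|)%N.
Proof. by rewrite cardsCs setCK card_ord. Qed.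

Ltac veq := apply/rowP => ?; rewrite !mxE; ring.

Lemma core n (L : 'rV[int]_n -> Prop) (n4 : (4 <= n)%N) (L0 : L 0)
  (LB : forall x y, L x -> L y -> L (x - y))
  (pack : forall A B, L (ind A - ind B) -> (#|A| <= n - 2)%N -> (#|B| <= n - 2)%N -> A = B)
  (cover : forall z : 'rV[int]_n, exists2 A : {set 'I_n}, (#|A| <= n - 2)%N & L (z - ind A)) : False.
Proof.
have LN : forall x, L x -> L (- x) by move=> x Lx; rewrite -sub0r; exact: LB.
have LD : forall x y, L x -> L y -> L (x + y).
  by move=> x y Lx Ly; rewrite -[y]opprK; apply: LB => //; apply: LN.
have Lrw : forall x y, L x -> x = y -> L y by move=> x y ? <-.
have Z : forall A, L (ind A) -> (#|A| <= n - 2)%N -> A = set0.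
  move=> A LA hA; apply: pack; rewrite ?ind0 ?subr0 ?cards0 //.
set J := ind [set: 'I_n].
have [B hB LB0] := cover J.
have eC : ind (~: B) = J - ind B by rewrite indC.
have LC : L (ind (~: B)) by rewrite eC.
have cC := cardC' B.
have [B0|B1] : #|B| = 0%N \/ #|B| = 1%N.
  have [|//] : (#|B| <= 1)%N \/ (2 <= #|B|)%N by lia.
    by lia.
  move=> h2; have := Z _ LC; rewrite cC => /(_ ltac:(lia)) C0.
  by have := cC; rewrite C0 cards0; lia.
- move/eqP: B0; rewrite cards_eq0 => /eqP B0.
  have LJ : L J by move: LB0; rewrite B0 ind0 subr0.
  have two : forall i, L (ind [set i] + ind [set i]).
    move=> i; have [A hA HA] := cover (- ind [set i]).
    case iA: (i \in A).
    - have eA := indD1 iA; have cA := cardD1' iA.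
      have eP : ind (~: A) = J - ind A by rewrite indC.
      have cP := cardC' A.
      have LP : L (ind (~: A) - ind [set i]).
        have := LD _ _ LJ HA.
        move/Lrw; apply.
        rewrite eP; veq.
      have [hP|hP] : (#|~: A| <= n - 2)%N \/ (n - 2 < #|~: A|)%N by lia.
        have := pack _ _ LP hP; rewrite cards1 => /(_ ltac:(lia)) PA.
        by move: (set11 i); rewrite -PA inE iA.
      have : #|A :\ i| = 0%N by lia.
      move/eqP; rewrite cards_eq0 => /eqP A0.
      apply: (Lrw _ _ (LN _ HA)); rewrite eA A0 ind0; veq.
    - have iA' : i \notin A by rewrite iA.
      have eQ := indU1 iA'; have cQ := cardU1' iA'.
      have LQ : L (ind (i |: A)) by apply: (Lrw _ _ (LN _ HA)); rewrite eQ; veq.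
      have [hQ|hQ] : (#|i |: A| <= n - 2)%N \/ (n - 2 < #|i |: A|)%N by lia.
        have := Z _ LQ hQ => Q0.
        by move: (setU11 i A); rewrite Q0 inE.
      have cP := cardC' (i |: A).
      have LP : L (ind (~: (i |: A))) by rewrite indC; exact: LB.
      have := Z _ LP ltac:(lia) => P0.
      by move: cP; rewrite P0 cards0; lia.
  have lt0 : (0 < n)%N by lia.
  have lt1 : (1 < n)%N by lia.
  pose i0 := Ordinal lt0; pose i1 := Ordinal lt1.
  have ni : i0 \notin [set i1] by rewrite inE.
  have eD := indU1 ni; have cD := cardU1' ni; rewrite cards1 in cD.
  have eE : ind (~: (i0 |: [set i1])) = J - ind (i0 |: [set i1]) by rewrite indC.
  have cE := cardC' (i0 |: [set i1]).
  have LDE : L (ind (i0 |: [set i1]) - ind (~: (i0 |: [set i1]))).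
    apply: (Lrw _ _ (LB _ _ (LD _ _ (two i0) (two i1)) LJ)).
    rewrite eE eD; veq.
  have h1 : (#|i0 |: [set i1]| <= n - 2)%N by rewrite cD; lia.
  have h2 : (#|~: (i0 |: [set i1])| <= n - 2)%N by rewrite cE cD; lia.
  have := pack _ _ LDE h1 h2 => DE.
  by move: (setU11 i0 [set i1]); rewrite DE !inE eqxx.
- move/eqP: B1 => /cards1P [k Bk].
  rewrite {}Bk in eC LC cC LB0 hB.
  rewrite cards1 in cC.
  have Lk0 : ~ L (ind [set k]).
    move=> Lk; have := Z _ Lk; rewrite cards1 => /(_ ltac:(lia)) k0.
    by move: (set11 k); rewrite k0 inE.
  have a : forall i, i != k -> L (ind [set k] - (ind [set i] + ind [set i])).
    move=> i ik; have ki : k != i by rewrite eq_sym.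
    have [P hP H] := cover (ind [set k] - ind [set i]).
    case iP: (i \in P).
    - have eP := indD1 iP; have cP := cardD1' iP.
      have iP' : i \notin P :\ i by rewrite !inE eqxx.
      case kP': (k \in P :\ i).
      + have eP' := indD1 kP'; have cP' := cardD1' kP'.
        have iP'' : i \notin (P :\ i) :\ k by rewrite !inE eqxx andbF.
        have kP'' : k \notin (P :\ i) :\ k by rewrite !inE eqxx.
        have kiP'' : k \notin i |: ((P :\ i) :\ k) by rewrite !inE eqxx (negbTE ki).
        have e1 := indU1 iP''; have c1 := cardU1' iP''.
        have e2 := indU1 kiP''; have c2 := cardU1' kiP''.
        set R := ~: (k |: (i |: ((P :\ i) :\ k))).
        have eR : ind R = J - ind (k |: (i |: ((P :\ i) :\ k))) by rewrite /R indC.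
        have cR : #|R| = (n - #|k |: (i |: ((P :\ i) :\ k))|)%N by rewrite /R cardC'.
        have LR : L (ind R - ind [set i]).
          apply: (Lrw _ _ (LD _ _ LC H)); rewrite eR e2 e1 eC eP eP'; veq.
        have := pack _ _ LR ltac:(lia); rewrite cards1 => /(_ ltac:(lia)) Ri.
        by move: (set11 i); rewrite -Ri /R !inE eqxx /= orbT.
      + have kP'n : k \notin P :\ i by rewrite kP'.
        have kiP' : k \notin i |: (P :\ i) by move: kP'; rewrite !inE (negbTE ki) /= => ->.
        have e1 := indU1 iP'; have c1 := cardU1' iP'.
        have e2 := indU1 kiP'; have c2 := cardU1' kiP'.
        set R := ~: (k |: (i |: (P :\ i))).
        have eR : ind R = J - ind (k |: (i |: (P :\ i))) by rewrite /R indC.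
        have cR : #|R| = (n - #|k |: (i |: (P :\ i))|)%N by rewrite /R cardC'.
        have kR : k \notin R by rewrite /R !inE eqxx.
        have e3 := indU1 kR; have c3 := cardU1' kR.
        have [P0|Pn0] : #|P :\ i| = 0%N \/ (0 < #|P :\ i|)%N by lia.
          move/eqP: P0; rewrite cards_eq0 => /eqP P0.
          apply: (Lrw _ _ H); rewrite eP P0 ind0; veq.
        have LQ : L (ind (k |: R) - ind [set i]).
          apply: (Lrw _ _ (LD _ _ LC H)); rewrite e3 eR e2 e1 eC eP; veq.
        have := pack _ _ LQ ltac:(lia); rewrite cards1 => /(_ ltac:(lia)) Qi.
        by move: (setU11 k R); rewrite Qi inE (negbTE ki).
    - have iP' : i \notin P by rewrite iP.
      have eQ := indU1 iP'; have cQ := cardU1' iP'.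
      have LQ : L (ind [set k] - ind (i |: P)).
        apply: (Lrw _ _ H); rewrite eQ; veq.
      case kQ: (k \in i |: P).
      + have eQ' := indD1 kQ; have cQ' := cardD1' kQ.
        have LQ' : L (ind ((i |: P) :\ k)).
          apply: (Lrw _ _ (LN _ LQ)); rewrite eQ'; veq.
        have := Z _ LQ' ltac:(lia) => Q0.
        by move/setP: Q0 => /(_ i); rewrite !inE ik eqxx.
      + have [hQ|hQ] : (#|i |: P| <= n - 2)%N \/ (n - 2 < #|i |: P|)%N by lia.
          have := pack _ _ LQ; rewrite cards1 => /(_ ltac:(lia) hQ) kQ'.
          by move: (setU11 i P); rewrite -kQ' inE (negbTE ik).
        have QC : i |: P = ~: [set k].
          apply/eqP; rewrite eqEcard cC; apply/andP; split; last by lia.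
          apply/subsetP => x xQ; rewrite !inE; apply/eqP => xk.
          by move: kQ; rewrite -xk xQ.
        by exfalso; apply: Lk0; apply: (Lrw _ _ (LD _ _ LQ LC)); rewrite QC; veq.
  have b : L (ind [set k] + ind [set k]).
    have [P hP H] := cover (ind [set k] + ind [set k]).
    case kP: (k \in P).
    - have eP := indD1 kP; have cP := cardD1' kP.
      have LP : L (ind [set k] - ind (P :\ k)) by apply: (Lrw _ _ H); rewrite eP; veq.
      have := pack _ _ LP; rewrite cards1 => /(_ ltac:(lia) ltac:(lia)) kP'.
      by move: (set11 k); rewrite kP' !inE eqxx.
    - have [P0|[j jP]] := set_0Vmem P.
        by apply: (Lrw _ _ H); rewrite P0 ind0; veq.
      have jk : j != k by apply/eqP => e; move: kP; rewrite -e jP.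
      have aj := a j jk.
      have eP := indD1 jP; have cP := cardD1' jP.
      have kj : k \notin [set j] by rewrite inE eq_sym.
      have eD := indU1 kj; have cD := cardU1' kj; rewrite cards1 in cD.
      have LP : L (ind (k |: [set j]) - ind (P :\ j)).
        apply: (Lrw _ _ (LB _ _ H aj)); rewrite eD eP; veq.
      have := pack _ _ LP; rewrite cD => /(_ ltac:(lia) ltac:(lia)) DP.
      by move: (setU1r k (set11 j)); rewrite DP !inE eqxx.
  have [i ik] : exists i, i != k.
    have : (0 < #|~: [set k]|)%N by rewrite cC; lia.
    by case/card_gt0P => i; rewrite !inE => ik; exists i.
  have ai := a i ik.
  have ki : i \notin [set k] by rewrite inE.
  have eD := indU1 ki; have cD := cardU1' ki; rewrite cards1 in cD.
  have eE : ind (~: (i |: [set k])) = J - ind (i |: [set k]) by rewrite indC.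
  have cE := cardC' (i |: [set k]).
  have LDE : L (ind (i |: [set k]) - ind (~: (i |: [set k]))).
    apply: (Lrw _ _ (LB _ _ (LB _ _ b ai) LC)); rewrite eE eD eC; veq.
  have h1 : (#|i |: [set k]| <= n - 2)%N by rewrite cD; lia.
  have h2 : (#|~: (i |: [set k])| <= n - 2)%N by rewrite cE cD; lia.
  have := pack _ _ LDE h1 h2 => DE.
  by move: (setU11 i [set k]); rewrite DE !inE eqxx.
Qed.

Lemma Sball_ind n (A : {set 'I_n}) : (#|A| <= n - 2)%N -> Sball n (n - 2) 1 (ind A).
Proof.
move=> hA; split.
  by move=> i; rewrite indE; case: (i \in A).
suff -> : [set i : 'I_n | ind A ord0 i != 0] = A by [].
by apply/setP => i; rewrite inE indE; case: (i \in A).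
Qed.

Theorem mainTheorem6 :
  forall (n : nat), (4 <= n)%N ->
  forall B : 'M[int]_n, lin_indep_rows n B ->
  ~ perfect n (n - 2) 1 ((lattice_of n B)).
Proof.
move=> n n4 B _ [pk cv].
apply: (@core n (lattice_of n B) n4).
- by exists 0; rewrite mul0mx.
- by move=> x y [c1 ->] [c2 ->]; exists (c1 - c2); rewrite mulmxBl.
- move=> A A' [c Hc] hA hA'.
  have L0 : lattice_of n B 0 by exists 0; rewrite mul0mx.
  have LX : lattice_of n B (ind A' - ind A) by exists (- c); rewrite mulNmx -Hc opprB.
  have := pk _ _ _ _ LX L0 (Sball_ind hA) (Sball_ind hA').
  rewrite add0r subrK => /(_ erefl) /eqP; rewrite subr_eq0 => /eqP e.
  by apply: ind_inj.
- move=> z; have [X [e [LX [[Se1 Se2] ->]]]] := cv z.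
  have ee : e = ind [set i | e ord0 i != 0].
    apply/rowP => j; rewrite indE inE; have := Se1 j.
    case: eqP => [->|h0] //= /andP [h1 h2].
    have -> : (0 : 'I_1) = ord0 by apply: val_inj.
    lia.
  exists [set i | e ord0 i != 0] => //.
  by rewrite {1}ee addrK.
Qed.
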